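(* For all integers $n,k,s,b$ with $n \geq k \geq s > b \geq 0$, $n > 0$ and $n \geq k+s-b$, there exists an $(n,k,s,b)$-oriented graph.
   Context: An oriented graph is a digraph with no loops and no pair of symmetric arcs. For vertices $u,v$ write $u(1\text{-}0)v$ if there is an arc from $u$ to $v$, and $u(0\text{-}0)v$ if there is no arc between $u$ and $v$. A vertex $v$ is weakly reachable within two steps from $u$ if $u(1\text{-}0)v$, or $u(0\text{-}0)v$, or for some vertex $w$ one has $u(1\text{-}0)w(1\text{-}0)v$, or $u(1\text{-}0)w(0\text{-}0)v$, or $u(0\text{-}0)w(1\text{-}0)v$. A vertex $u$ is a weak king if every other vertex is weakly reachable within two steps from $u$, and a weak serf if $u$ is weakly reachable within two steps from every other vertex. An $(n,k,s,b)$-oriented graph is an oriented graph on $n$ vertices with exactly $k$ weak kings and exactly $s$ weak serfs, such that exactly $b$ of the weak kings are also weak serfs. *)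

(* Defs.v *)
From mathcomp Require Import all_boot.
Set Implicit Arguments. Unset Strict Implicit. Unset Printing Implicit Defensive.

Definition oriented (n : nat) (arc : rel 'I_n) : bool :=
  [forall u, ~~ arc u u] && [forall u, forall v, ~~ (arc u v && arc v u)].

Definition arc10 n (arc : rel 'I_n) (u v : 'I_n) : bool := arc u v.
Definition arc00 n (arc : rel 'I_n) (u v : 'I_n) : bool :=
  ~~ arc u v && ~~ arc v u.

Definition wreach2 n (arc : rel 'I_n) (u v : 'I_n) : bool :=
  [|| arc10 arc u v, arc00 arc u v
    | [exists w, [|| arc10 arc u w && arc10 arc w v,
                     arc10 arc u w && arc00 arc w v
                   | arc00 arc u w && arc10 arc w v]]].

Definition weak_king n (arc : rel 'I_n) (u : 'I_n) : bool :=
  [forall v, (v != u) ==> wreach2 arc u v].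

Definition weak_serf n (arc : rel 'I_n) (u : 'I_n) : bool :=
  [forall v, (v != u) ==> wreach2 arc v u].

Definition is_nksb_graph n (arc : rel 'I_n) (k s b : nat) : Prop :=
  [/\ oriented arc,
      #|[set u | weak_king arc u]| = k,
      #|[set u | weak_serf arc u]| = s &
      #|[set u | weak_king arc u && weak_serf arc u]| = b].

(* Main.v *)
Require Import Defs.
From mathcomp Require Import all_boot.
From mathcomp Require Import zify.

Lemma card_val n (P : pred nat) :
  #|[set u : 'I_n | P (nat_of_ord u)]| = count P (iota 0 n).
Proof.
rewrite cardsE -sum1_card.
rewrite -(big_mkord P (fun _ => 1)) /index_iota subn0 sum1_count.
by [].
Qed.

Lemma count_iotaS (P : pred nat) n :
  count P (iota 0 n.+1) = count P (iota 0 n) + P n.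
Proof. by rewrite -addn1 iotaD count_cat /= addn0 add0n. Qed.

Lemma count_lt c n : count (fun i => i < c) (iota 0 n) = minn c n.
Proof.
elim: n => [|n IH]; first by rewrite minn0.
rewrite count_iotaS IH; case: (ltnP n c) => /= H; lia.
Qed.

Lemma count_lt_ge b c n : b <= c ->
  count (fun i => (i < b) || (c <= i)) (iota 0 n) = minn b n + (n - c).
Proof.
move=> Hbc; elim: n => [|n IH]; first by rewrite /= minn0.
rewrite count_iotaS IH; case: (ltnP n b) => /= H1; case: (leqP c n) => H2 /=; lia.
Qed.

Section Constr.
Variables (n k s b : nat).
Hypotheses (Hsk : s <= k) (Hkn : k <= n) (Hbs : b < s) (Hn : 0 < n)
  (Hks : k + s - b <= n).
Let m := n - (k + s - b).
Definition lev (i : nat) := minn (i + 1 - k) (m + 1).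
Definition carc : rel 'I_n := fun u v => [&& b <= u, b <= v & lev u < lev v].

Lemma direct u v : ~~ carc v u -> wreach2 carc u v.
Proof.
move=> H; rewrite /wreach2 /arc10 /arc00 H andbT.
by case: (carc u v).
Qed.

Lemma kingP u : weak_king carc u = (nat_of_ord u < k).
Proof.
case: (ltnP u k) => Hu.
  apply/forallP => v; apply/implyP => _; apply: direct.
  rewrite /carc /lev; lia.
have Hb : b < n by lia.
apply/negbTE/forallP => /(_ (Ordinal Hb)) /implyP.
have -> : (Ordinal Hb != u) by apply/eqP => /(congr1 val) /=; lia.
move=> /(_ isT); rewrite /wreach2 /arc10 /arc00 /carc /lev /=.
case/or3P; try lia.
case/existsP => w; rewrite /=; lia.
Qed.

Lemma serfP u : weak_serf carc u = (nat_of_ord u < b) || (k + m <= nat_of_ord u).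
Proof.
case: (boolP ((nat_of_ord u < b) || (k + m <= nat_of_ord u))) => Hu.
  apply/forallP => v; apply/implyP => _; apply: direct.
  rewrite /carc /lev; lia.
have Hn1 : n.-1 < n by lia.
apply/negbTE/forallP => /(_ (Ordinal Hn1)) /implyP.
have -> : (Ordinal Hn1 != u) by apply/eqP => /(congr1 val) /=; lia.
move=> /(_ isT); rewrite /wreach2 /arc10 /arc00 /carc /lev /=.
case/or3P; try lia.
case/existsP => w; rewrite /=; lia.
Qed.

Lemma carc_ok : is_nksb_graph carc k s b.
Proof.
split.
- apply/andP; split; apply/forallP => u; rewrite /carc; first lia.
  apply/forallP => v; lia.
- have -> : [set u | weak_king carc u] = [set u : 'I_n | nat_of_ord u < k].
    by apply/setP => u; rewrite !inE kingP.
  rewrite (card_val n (fun i => i < k)) count_lt; lia.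
- have -> : [set u | weak_serf carc u] = [set u : 'I_n | (nat_of_ord u < b) || (k + m <= nat_of_ord u)].
    by apply/setP => u; rewrite !inE serfP.
  rewrite (card_val n (fun i => (i < b) || (k + m <= i))) count_lt_ge; rewrite /m; lia.
- have -> : [set u | weak_king carc u && weak_serf carc u] = [set u : 'I_n | nat_of_ord u < b].
    by apply/setP => u; rewrite !inE kingP serfP; rewrite /m; lia.
  rewrite (card_val n (fun i => i < b)) count_lt; lia.
Qed.
End Constr.

Theorem theorem9 (n k s b : nat) :
  s <= k -> k <= n -> b < s -> 0 < n -> k + s - b <= n ->
  exists arc : rel 'I_n, is_nksb_graph arc k s b.
Proof.
move=> H1 H2 H3 H4 H5; exists (carc n k s b); exact: carc_ok.
Qed.
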